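(* Let $S$ be the group $\mathbb{Z}/2$, viewed as a semigroup. The category $\mathbf{OI}_{++ep}/N(S)$ is Gröbner.
   Context: Gröbner categories. Let $\mathcal{C}$ be a small category and $c$ an object. An admissible order on the morphisms out of $c$ is a choice, for every object $c'$, of a well-order $\preceq_{c'}$ on $\mathrm{Hom}(c,c')$ such that $f\prec_{c'} f'$ implies $g\circ f\prec_{c''} g\circ f'$ for all $g:c'\to c''$. On morphisms out of $c$ put the preorder $f\le g$ iff $g=h\circ f$ for some $h$; $|c/\mathcal{C}|$ is the associated poset. A poset is Noetherian if every sequence $x_1,x_2,\dots$ has $i<j$ with $x_i\le x_j$. $\mathcal{C}$ is Gröbner if for every object $c$: (G1) morphisms out of $c$ admit an admissible order, and (G2) $|c/\mathcal{C}|$ is Noetherian. $\mathbf{OI}_{++ep}$ is the category of finite ordinals $[n]=\{0<1<\dots<n\}$ with $n\ge1$ and order-preserving injections preserving both endpoints. $N(S)$ assigns $S^n$ to $[n]$, and for such $\varphi:[n]\to[m]$, $N(S)(\varphi)(t_1,\dots,t_m)=(s_1,\dots,s_n)$ with $s_i=t_{\varphi(i-1)+1}\cdots t_{\varphi(i)}$. $\mathbf{OI}_{++ep}/N(S)$ is its category of elements: objects are non-empty finite sequences $(s_1,\dots,s_n)$ in $S$; a morphism $(s_1,\dots,s_n)\to(t_1,\dots,t_m)$ is an endpoint-preserving injection $\varphi:[n]\to[m]$ with $N(S)(\varphi)(t_1,\dots,t_m)=(s_1,\dots,s_n)$. *)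

(* Defs.v *)
From mathcomp Require Import all_boot all_algebra.
Set Implicit Arguments. Unset Strict Implicit. Unset Printing Implicit Defensive.

(* The category of elements OI_{++ep}/N(S) for a semigroup (T, op).
   Objects: non-empty sequences s = (s_1,...,s_n) (here: seq T with size > 0).
   A morphism s -> t (n = size s, m = size t) is an order-preserving injection
   phi : [n] -> [m] preserving both endpoints, encoded by the list of its values
   [:: phi 0; phi 1; ...; phi n] (a seq nat), such that
   s_i = t_{phi(i-1)+1} * ... * t_{phi(i)} for i = 1..n. *)
Section ElemCat.
Variables (T : eqType) (op : T -> T -> T).

Definition seqprod (l : seq T) : option T :=
  if l is x :: r then Some (foldl op x r) else None.

(* the block t_{a+1} ... t_b (1-based), i.e. 0-based entries a .. b-1 *)
Definition block (t : seq T) (a b : nat) : seq T := take (b - a) (drop a t).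

Definition isHom (s t : seq T) (p : seq nat) : bool :=
  [&& size p == (size s).+1,
      nth 0 p 0 == 0,
      nth 0 p (size s) == size t,
      sorted ltn p &
      [seq seqprod (block t (nth 0 p i) (nth 0 p i.+1)) | i <- iota 0 (size s)]
        == map Some s].

Definition comp (g f : seq nat) : seq nat := map (nth 0 g) f.

Definition well_order_on (X : Type) (A : X -> Prop) (le : X -> X -> bool) :=
  [/\ (forall x, A x -> le x x),
      (forall x y, A x -> A y -> le x y -> le y x -> x = y),
      (forall x y z, A x -> A y -> A z -> le x y -> le y z -> le x z),
      (forall x y, A x -> A y -> le x y \/ le y x) &
      (forall P : X -> Prop, (exists x, A x /\ P x) ->
         exists x, [/\ A x, P x & forall y, A y -> P y -> le x y])].

Definition admissible_order (c : seq T) (ord : seq T -> rel (seq nat)) :=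
  (forall c', 0 < size c' -> well_order_on (fun f => isHom c c' f) (ord c')) /\
  (forall c' c'' f f' g, 0 < size c' -> 0 < size c'' ->
     isHom c c' f -> isHom c c' f' -> isHom c' c'' g ->
     ord c' f f' && (f != f') ->
     ord c'' (comp g f) (comp g f') && (comp g f != comp g f')).

Definition noetherian_under (c : seq T) :=
  forall (tgt : nat -> seq T) (x : nat -> seq nat),
    (forall k, 0 < size (tgt k)) -> (forall k, isHom c (tgt k) (x k)) ->
    exists i j, i < j /\ exists h, isHom (tgt i) (tgt j) h /\ x j = comp h (x i).

Definition groebner_elem_cat : Prop :=
  forall c : seq T, 0 < size c ->
    (exists ord, admissible_order c ord) /\ noetherian_under c.

End ElemCat.

(* Main.v *)
Require Import Defs.
From mathcomp Require Import all_boot all_algebra.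
From Stdlib Require Import Classical ClassicalEpsilon.
From mathcomp Require Import zify.
Set Implicit Arguments. Unset Strict Implicit. Unset Printing Implicit Defensive.

Lemma nat_min (P : nat -> Prop) n : P n -> exists m, P m /\ forall k, P k -> m <= k.
Proof.
elim/ltn_ind: n => n IH Pn.
destruct (classic (exists k, P k /\ k < n)) as [[k [Pk lt]]|no].
  exact: (IH k lt Pk).
exists n; split => // k Pk; rewrite leqNgt; apply/negP => lt; apply: no; eauto.
Qed.

Section Higman.
Variables (A : finType) (x0 : A).

Definition emb (u v : seq A) : Prop := exists h : nat -> nat,
  (forall i j, i < j -> j < size u -> h i < h j) /\
  (forall i, i < size u -> h i < size v /\ nth x0 v (h i) = nth x0 u i).

Definition bad (f : nat -> seq A) := forall i j, i < j -> ~ emb (f i) (f j).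

Lemma emb_nil v : emb [::] v.
Proof. by exists id. Qed.

Lemma emb_cons a u v : emb u v -> emb (a :: u) (a :: v).
Proof.
case=> h [h1 h2]; exists (fun i => if i is i'.+1 then (h i').+1 else 0); split.
  move=> [|i] [|j] //= ij jl; rewrite ltnS; apply: h1 => //.
move=> [|i] //= il; have [] := h2 i il; rewrite ltnS => -> ->; done.
Qed.

Lemma emb_behead u v : emb u (behead v) -> emb u v.
Proof.
case: v => [|y v] //= [h [h1 h2]]; exists (fun i => (h i).+1); split.
  by move=> i j ij jl; rewrite ltnS; apply: h1.
by move=> i il; have [] := h2 i il; rewrite /= ltnS.
Qed.

Definition ext (l : seq (seq A)) :=
  exists f, bad f /\ forall i, i < size l -> f i = nth [::] l i.

Definition next (l : seq (seq A)) : seq A :=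
  epsilon (inhabits [::]) (fun w => ext (rcons l w) /\
     forall w', ext (rcons l w') -> size w <= size w').

Lemma next_spec l : ext l -> ext (rcons l (next l)) /\
     forall w', ext (rcons l w') -> size (next l) <= size w'.
Proof.
move=> [f [bf ef]].
apply: (@epsilon_spec _ (inhabits [::]) (fun w => ext (rcons l w) /\
     forall w', ext (rcons l w') -> size w <= size w')).
have e1 : ext (rcons l (f (size l))).
  exists f; split => // i; rewrite size_rcons ltnS leq_eqVlt nth_rcons.
  by case/orP => [/eqP->|il]; [rewrite ltnn eqxx | rewrite il ef].
have [m [[w [sw ew]] mm]] := nat_min (P := fun n => exists w, size w = n /\ ext (rcons l w)) (ex_intro _ _ (conj erefl e1)).
exists w; split => // w' ew'; rewrite sw; apply: mm; eauto.
Qed.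

Fixpoint pre k := if k is k'.+1 then rcons (pre k') (next (pre k')) else [::].
Definition g k := next (pre k).

Hypothesis ext0 : ext [::].

Lemma pre_ext k : ext (pre k).
Proof. by elim: k => //= k IH; case: (next_spec IH). Qed.

Lemma size_pre k : size (pre k) = k.
Proof. by elim: k => //= k IH; rewrite size_rcons IH. Qed.

Lemma nth_pre k i : i < k -> nth [::] (pre k) i = g i.
Proof.
elim: k => //= k IH; rewrite ltnS leq_eqVlt nth_rcons size_pre.
by case/orP => [/eqP->|ik]; rewrite ?ltnn ?eqxx ?ik ?IH.
Qed.

Lemma g_bad : bad g.
Proof.
move=> i j ij e; have [f [bf ef]] := pre_ext j.+1.
apply: (bf i j ij); rewrite !ef ?size_pre ?(ltn_trans ij) // !nth_pre ?(ltn_trans ij) //.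
Qed.

Lemma g_min k w : ext (rcons (pre k) w) -> size (g k) <= size w.
Proof. by case: (next_spec (pre_ext k)) => _; apply. Qed.

Lemma g_nonempty k : g k <> [::].
Proof. move=> e; apply: (g_bad (ltnSn k)); rewrite e; exact: emb_nil. Qed.

Lemma inf_head : exists a, forall N, exists k, N <= k /\ head x0 (g k) = a.
Proof.
apply: NNPP => H.
have Ha : forall a, exists N, forall k, N <= k -> head x0 (g k) <> a.
  move=> a; apply: NNPP => na; apply: H; exists a => N; apply: NNPP => nb.
  apply: na; exists N => k Nk e; apply: nb; eauto.
pose N a := proj1_sig (constructive_indefinite_description _ (Ha a)).
have HN a : forall k, N a <= k -> head x0 (g k) <> a.
  exact: (proj2_sig (constructive_indefinite_description _ (Ha a))).
pose M := \max_(a : A) N a.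
by apply: (HN (head x0 (g M)) M) => //; apply: (leq_bigmax (head x0 (g M))).
Qed.

Lemma higman_contra : False.
Proof.
have [a Ha] := inf_head.
pose phi N := proj1_sig (constructive_indefinite_description _ (Ha N)).
have Hphi N : N <= phi N /\ head x0 (g (phi N)) = a.
  exact: (proj2_sig (constructive_indefinite_description _ (Ha N))).
pose sigma := fix sigma i := if i is i'.+1 then phi (sigma i').+1 else phi 0.
have sS i : sigma i < sigma i.+1 by case: (Hphi (sigma i).+1).
have smono : {homo sigma : i j / i < j >-> i < j}.
  by apply: homo_ltn => // y x z; apply: ltn_trans.
have sh i : head x0 (g (sigma i)) = a by case: i => [|i]; [case: (Hphi 0) | case: (Hphi (sigma i).+1)].
have gcons k : g k = head x0 (g k) :: behead (g k).
  by case E: (g k) => [|y r] //; case: (g_nonempty E).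
pose k0 := sigma 0.
pose f' n := if n < k0 then g n else behead (g (sigma (n - k0))).
have bf' : bad f'.
  move=> i j ij; rewrite /f'.
  case: (ltnP j k0) => jk.
    by rewrite (ltn_trans ij jk); apply: g_bad.
  case: (ltnP i k0) => ik.
    move/emb_behead; apply: g_bad.
    apply: (leq_trans ik); have sle m : sigma 0 <= sigma m.
      by case: m => [|m] //; exact: ltnW (smono 0 m.+1 isT).
    exact: sle.
  move=> e; apply: (g_bad (smono (i - k0) (j - k0) _)).
    by rewrite ltn_sub2r // (leq_ltn_trans ik ij).
  by rewrite gcons [g (sigma (j - k0))]gcons !sh; apply: emb_cons.
have ex : ext (rcons (pre k0) (behead (g k0))).
  exists f'; split => // i; rewrite size_rcons size_pre ltnS leq_eqVlt nth_rcons size_pre.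
  case/orP => [/eqP->|il]; first by rewrite ltnn eqxx /f' ltnn subnn.
  by rewrite il /f' il nth_pre.
have := g_min ex; rewrite {1}gcons /= ltnn; done.
Qed.

End Higman.

Theorem higman (A : finType) (x0 : A) (f : nat -> seq A) :
  exists i j, i < j /\ emb x0 (f i) (f j).
Proof.
apply: NNPP => H; apply: (higman_contra (x0 := x0)); exists f; split => // i j ij e.
by apply: H; exists i, j.
Qed.
Fixpoint code (B : nat) (l : seq nat) : nat :=
  if l is x :: r then x * B ^ size r + code B r else 0.

Lemma code_lt B l : (forall x, x \in l -> x < B) -> code B l < B ^ size l.
Proof.
elim: l => [|x r IH] hl /=; first by rewrite expn0.
have xB : x < B by apply: hl; rewrite inE eqxx.
have cr : code B r < B ^ size r by apply: IH => y yr; apply: hl; rewrite inE yr orbT.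
have := leq_mul xB (leqnn (B ^ size r)); rewrite expnS; move: (B ^ size r) cr => P; nia.
Qed.

Lemma key_lt x y c c' P : c < P -> c' < P ->
  (x * P + c < y * P + c') = (x < y) || ((x == y) && (c < c')).
Proof.
move=> cP c'P; case: (ltngtP x y) => [xy|yx|->] /=.
- have := leq_mul xy (leqnn P); nia.
- have := leq_mul yx (leqnn P); nia.
- by rewrite ltn_add2l.
Qed.

Lemma code_inj B l l' : 0 < B -> size l = size l' ->
  (forall x, x \in l -> x < B) -> (forall x, x \in l' -> x < B) ->
  code B l = code B l' -> l = l'.
Proof.
move=> B0; elim: l l' => [|x r IH] [|y r'] //= [sr] hl hl'.
have cr := code_lt (fun z zr => hl z (mem_behead zr)).
have cr' := code_lt (fun z zr => hl' z (mem_behead zr)).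
rewrite -sr in cr'.
have P0 : 0 < B ^ size r by rewrite expn_gt0 B0.
move=> e; rewrite -sr in e.
have ex : x = y.
  have := congr1 (fun k => k %/ B ^ size r) e; rewrite /= !divnMDl // !divn_small //.
  by rewrite !addn0.
have ec : code B r = code B r'.
  have := congr1 (fun k => k %% B ^ size r) e; rewrite /= !modnMDl !modn_small //.
rewrite ex (IH r') //.
- by move=> z zr; apply: hl; rewrite inE zr orbT.
- by move=> z zr; apply: hl'; rewrite inE zr orbT.
Qed.

Lemma code_map B B' (g : nat -> nat) l l' : size l = size l' ->
  (forall x, x \in l -> x < B) -> (forall x, x \in l' -> x < B) ->
  (forall x y, x < B -> y < B -> x < y -> g x < g y) ->
  (forall x, x < B -> g x < B') ->
  code B l < code B l' -> code B' (map g l) < code B' (map g l').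
Proof.
move=> + + + gm gB; elim: l l' => [|x r IH] [|y r'] //= [sr] hl hl'.
have hr z : z \in r -> z < B by move=> zr; apply: hl; rewrite inE zr orbT.
have hr' z : z \in r' -> z < B by move=> zr; apply: hl'; rewrite inE zr orbT.
have xB : x < B by apply: hl; rewrite inE eqxx.
have yB : y < B by apply: hl'; rewrite inE eqxx.
have hgr z : z \in map g r -> z < B'.
  by case/mapP => w wr ->; apply: gB; apply: hr.
have hgr' z : z \in map g r' -> z < B'.
  by case/mapP => w wr ->; apply: gB; apply: hr'.
have cr := code_lt hr; have cr' := code_lt hr'; rewrite -sr in cr'.
have gcr := code_lt hgr; have gcr' := code_lt hgr'.
rewrite !size_map -sr in gcr' *; rewrite size_map in gcr.
rewrite (key_lt _ _ cr cr') (key_lt _ _ gcr gcr').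
case/orP => [xy|/andP[/eqP-> c]]; first by rewrite gm.
by rewrite eqxx IH // ltnn.
Qed.
Import GRing.Theory.

Lemma hom_facts (T : eqType) (op : T -> T -> T) s t p : isHom op s t p ->
  [/\ size p = (size s).+1, nth 0 p 0 = 0, nth 0 p (size s) = size t &
      forall i j, i < j -> j < size p -> nth 0 p i < nth 0 p j].
Proof.
case/and5P => /eqP sp /eqP p0 /eqP pn so _; split => // i j ij jp.
apply: (@sorted_ltn_nth _ ltn ltn_trans 0 p so) => //; rewrite inE //.
exact: ltn_trans ij jp.
Qed.

Lemma hom_le (T : eqType) (op : T -> T -> T) s t p : isHom op s t p ->
  forall i, i < size p -> nth 0 p i <= size t.
Proof.
case/hom_facts => sp p0 pn pinc i; rewrite sp ltnS leq_eqVlt.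
case/orP => [/eqP->|ilt]; first by rewrite pn.
by rewrite -pn ltnW // pinc // sp.
Qed.

Lemma hom_uniq (T : eqType) (op : T -> T -> T) s t p : isHom op s t p -> uniq p.
Proof.
case/and5P => _ _ _ so _; apply: (sorted_uniq ltn_trans) => //; exact: ltnn.
Qed.

Local Open Scope ring_scope.

Definition ps (t : seq 'Z_2) (j : nat) : 'Z_2 := \sum_(x <- take j t) x.

Lemma seqprod_cons (x : 'Z_2) r : seqprod +%R (x :: r) = Some (\sum_(y <- x :: r) y).
Proof.
rewrite /= big_cons; congr Some.
elim: r x => [|y r IH] x /=; first by rewrite big_nil addr0.
by rewrite IH big_cons addrA.
Qed.

Lemma block_prod (t : seq 'Z_2) a b : (a < b)%N -> (b <= size t)%N ->
  seqprod +%R (block t a b) = Some (ps t b - ps t a).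
Proof.
move=> ab bt.
have E : take b t = take a t ++ block t a b by rewrite /block -takeD subnKC // ltnW.
have sb : size (block t a b) = (b - a)%N.
  by rewrite /block size_takel // size_drop leq_sub2r.
case B: (block t a b) sb => [|x r] sb.
  by move: ab; rewrite -subn_gt0 -sb.
rewrite seqprod_cons -B /ps E big_cat /=; congr Some.
by rewrite addrAC subrr add0r.
Qed.

Lemma ps_succ (t : seq 'Z_2) i : (i < size t)%N -> ps t i.+1 = ps t i + nth 0 t i.
Proof. by move=> it; rewrite /ps (take_nth 0) // -cats1 big_cat big_seq1. Qed.

Lemma ps0 t : ps t 0 = 0.
Proof. by rewrite /ps take0 big_nil. Qed.

Definition W n (t : seq 'Z_2) (p : seq nat) : seq ('Z_2 * 'I_n.+2) :=
  [seq (ps t j, inord (index j p)) | j <- iota 1 (size t)].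

Lemma nW n t p x0 i : (i < size t)%N -> nth x0 (W n t p) i = (ps t i.+1, inord (index i.+1 p)).
Proof. by move=> it; rewrite /W (nth_map 0) ?size_iota // nth_iota. Qed.

Lemma sW n t p : size (W n t p) = size t.
Proof. by rewrite size_map size_iota. Qed.

Lemma emb_hom (c t t' : seq 'Z_2) p p' : (0 < size t)%N ->
  isHom +%R c t p -> isHom +%R c t' p' ->
  emb (0, ord0) (W (size c) t p) (W (size c) t' p') ->
  exists H, isHom +%R t t' H /\ p' = Defs.comp H p.
Proof.
move=> tpos hp hp' [h [h1 h2]].
have [sp p0 pn pinc] := hom_facts hp.
have [sp' p0' pn' pinc'] := hom_facts hp'.
have up := hom_uniq hp; have up' := hom_uniq hp'.
rewrite sW in h1 h2.
pose Hf j := if j is j'.+1 then (h j').+1 else 0%N.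
have Hlt j : (j <= size t)%N -> (Hf j <= size t')%N.
  case: j => [|j] //= jm; have [+ _] := h2 j jm; rewrite sW; done.
have Eq j : (j < size t)%N -> ps t' (h j).+1 = ps t j.+1 /\ index (h j).+1 p' = index j.+1 p.
  move=> jm; have [hm e] := h2 j jm; rewrite sW in hm.
  rewrite !nW // in e; case: e => e1 e2; split => //.
  have := congr1 val e2; have is1 x : (index x p < (size c).+2)%N by rewrite ltnS -sp index_size.
  have is2 x : (index x p' < (size c).+2)%N by rewrite ltnS -sp' index_size.
  by rewrite /= !inordK ?is1 ?is2.
have E1 j : (j <= size t)%N -> ps t' (Hf j) = ps t j.
  by case: j => [|j] jm; [rewrite !ps0 | case: (Eq j jm)].
have E2 j : (0 < j <= size t)%N -> index (Hf j) p' = index j p.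
  by case: j => [|j] // /andP[_ jm]; case: (Eq j jm).
have Hinc j : (j < size t)%N -> (Hf j < Hf j.+1)%N.
  by case: j => [|j] //= jm; rewrite ltnS h1.
have key i : (0 < i)%N -> (i < size p)%N ->
    Hf (nth 0%N p i) = nth 0%N p' i /\ (0 < nth 0%N p i <= size t)%N.
  move=> i0 ip.
  have jpos : (0 < nth 0%N p i)%N by have := pinc 0%N i i0 ip; rewrite p0.
  have jm := hom_le hp ip.
  split; last by rewrite jpos jm.
  have ei : index (Hf (nth 0%N p i)) p' = i by rewrite E2 ?jpos ?jm // index_uniq.
  have mem : Hf (nth 0%N p i) \in p' by rewrite -index_mem ei sp' -sp.
  by rewrite -{2}ei nth_index.
pose H := 0%N :: [seq (h i).+1 | i <- iota 0 (size t)].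
have nH j : (j <= size t)%N -> nth 0%N H j = Hf j.
  by case: j => [|j] //= jm0; rewrite (nth_map 0%N) ?size_iota // nth_iota.
have sH : size H = (size t).+1 by rewrite /= size_map size_iota.
exists H; split.
  apply/and5P; split.
  - by rewrite sH.
  - by [].
  - have cpos : (0 < size c)%N.
      by move: tpos; rewrite -pn; case: (size c) => //; rewrite p0.
    have [e _] := key (size c) cpos (ltac:(by rewrite sp)).
    by rewrite nH // -{1}pn e pn'.
  - apply/(sortedP 0%N) => j; rewrite sH ltnS => jm.
    rewrite (nH j (ltnW jm)) (nH j.+1 jm); exact: Hinc.
  - apply/eqP; rewrite -{2}[t](mkseq_nth 0) /mkseq -map_comp.
    apply/eq_in_map => j; rewrite mem_iota add0n => /andP[_ jm].
    rewrite (nH j (ltnW jm)) (nH j.+1 jm).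
    rewrite (block_prod (Hinc j jm) (Hlt j.+1 jm)).
    rewrite (E1 j (ltnW jm)) (E1 j.+1 jm) (ps_succ jm).
    by rewrite addrAC subrr add0r.
apply: (@eq_from_nth _ 0%N); first by rewrite size_map sp sp'.
move=> i ip'; rewrite (nth_map 0%N); last by rewrite sp -sp'.
case: i ip' => [|i] ip'; first by rewrite p0 (nH 0%N isT) p0'.
have [e /andP[_ jm]] := key i.+1 isT (ltac:(by rewrite sp -sp')).
by rewrite (nH _ jm) e.
Qed.

Local Close Scope ring_scope.

Lemma hom_rng (T : eqType) (op : T -> T -> T) s t f : isHom op s t f ->
  forall x, x \in f -> x < (size t).+1.
Proof.
move=> hf x xf; rewrite ltnS -(nth_index 0 xf); apply: (hom_le hf).
by rewrite index_mem.
Qed.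

Lemma hom_inj (T : eqType) (op : T -> T -> T) s t f f' :
  isHom op s t f -> isHom op s t f' ->
  code (size t).+1 f = code (size t).+1 f' -> f = f'.
Proof.
move=> hf hf'; apply: code_inj => //.
- by case: (hom_facts hf) (hom_facts hf') => -> _ _ _ [-> _ _ _].
- exact: hom_rng hf.
- exact: hom_rng hf'.
Qed.

Theorem proposition5p13 : groebner_elem_cat (+%R : 'Z_2 -> 'Z_2 -> 'Z_2).
Proof.
move=> c cpos; split.
  exists (fun c' f f' => code (size c').+1 f <= code (size c').+1 f'); split.
  - move=> c' c'pos; split.
    + by move=> x _; exact: leqnn.
    + move=> x y hx hy a b; apply: (hom_inj hx hy); apply/eqP; by rewrite eqn_leq a b.
    + move=> x y z _ _ _; exact: leq_trans.
    + by move=> x y _ _; case/orP: (leq_total (code (size c').+1 x) (code (size c').+1 y)); [left|right].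
    + move=> P [x0 [hx0 Px0]].
      have [m [[x [hx [Px ex]]] mm]] := nat_min
        (P := fun k => exists x, isHom +%R c c' x /\ P x /\ code (size c').+1 x = k)
        (ex_intro _ x0 (conj hx0 (conj Px0 erefl))).
      exists x; split => // y hy Py; rewrite ex; apply: mm; eauto.
  - move=> c' c'' f f' g c'pos c''pos hf hf' hg /andP[le ne].
    have lt : code (size c').+1 f < code (size c').+1 f'.
      rewrite ltn_neqAle le andbT; apply/eqP => e; move/eqP: ne; apply.
      exact: hom_inj hf hf' e.
    have [sg _ _ ginc] := hom_facts hg.
    have sff : size f = size f'.
      by case: (hom_facts hf) (hom_facts hf') => -> _ _ _ [-> _ _ _].
    have gm x y : x < (size c').+1 -> y < (size c').+1 -> x < y -> nth 0 g x < nth 0 g y.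
      by move=> _ yB xy; apply: ginc; rewrite // sg.
    have gB x : x < (size c').+1 -> nth 0 g x < (size c'').+1.
      by move=> xB; rewrite ltnS; apply: (hom_le hg); rewrite sg.
    have lt' := code_map sff (hom_rng hf) (hom_rng hf') gm gB lt.
    rewrite /Defs.comp (ltnW lt') /=; apply/eqP => e; move: lt'; rewrite e ltnn.
    done.
move=> tgt x tpos hx.
have [i [j [ij e]]] := higman (0%R : 'Z_2, ord0 : 'I_(size c).+2)
  (fun k => W (size c) (tgt k) (x k)).
have [H [hH eH]] := emb_hom (tpos i) (hx i) (hx j) e.
by exists i, j; split => //; exists H.
Qed.
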